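(* Let $S$ be a semigroup. If $\ell^{1}(S)^{**}$ is pseudo-contractible, then $S$ is amenable.
   Context: $\ell^1(S)$ is the semigroup algebra of $S$ and $\ell^1(S)^{**}$ carries the first Arens product. A Banach algebra $A$ is pseudo-contractible if there is a (not necessarily bounded) net $(m_\alpha)$ in $A\otimes_p A$ such that $a\cdot m_\alpha=m_\alpha\cdot a$ and $\pi_A(m_\alpha)a\to a$ for all $a\in A$, where $\pi_A(a\otimes b)=ab$ and the module actions are $a\cdot(b\otimes c)=ab\otimes c$, $(b\otimes c)\cdot a=b\otimes ca$. With $\phi$ the augmentation character on $\ell^1(S)$, $S$ is left (right) amenable if there is $m\in\ell^1(S)^{**}$ with $\delta_s\cdot m=m$ (resp. $m\cdot\delta_s=m$) for all $s\in S$ and $\|m\|=m(\phi)=1$; $S$ is amenable if it is both left and right amenable. *)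

(* Defs.v *)
From HB Require Import structures.
From mathcomp Require Import all_boot all_order all_algebra.
From mathcomp Require Import all_classical all_reals all_analysis.
From mathcomp Require Import complex.
Set Implicit Arguments. Unset Strict Implicit. Unset Printing Implicit Defensive.
Import Order.TTheory GRing.Theory Num.Theory.
Import numFieldNormedType.Exports.
Local Open Scope ring_scope.
Local Open Scope classical_set_scope.

Section Defs.
Variable K : numFieldType.   (* scalar field; instantiated with R[i] *)
Variable S : Type.
Variable op : S -> S -> S.

Definition supnorm_le (f : S -> K) (c : K) : Prop := forall s, `|f s| <= c.

Definition bounded (f : S -> K) : Prop := exists c : K, supnorm_le f c.

(* Carrier of l^1(S)^** = dual of l^oo(S) : functionals on S -> K; only their values on
   bounded functions matter. *)
Definition BD := (S -> K) -> K.

Definition normBD_le (Phi : BD) (c : K) : Prop :=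
  forall (f : S -> K) (c' : K), 0 <= c' -> supnorm_le f c' -> `|Phi f| <= c * c'.

Definition isBD (Phi : BD) : Prop :=
  (forall (k : K) (f g : S -> K), bounded f -> bounded g ->
      Phi (fun s => k * f s + g s) = k * Phi f + Phi g)
  /\ exists c : K, normBD_le Phi c.

Definition normBD_eq (Phi : BD) (c : K) : Prop :=
  normBD_le Phi c /\ forall c', normBD_le Phi c' -> c <= c'.

Definition eqBD (Phi Psi : BD) : Prop := forall f, bounded f -> Phi f = Psi f.

(* first Arens product on l^1(S)^** = dual of l^oo(S):
   (Phi [] Psi)(f) = Phi (s |-> Psi (t |-> f (s t))) *)
Definition arens (Phi Psi : BD) : BD :=
  fun f => Phi (fun s => Psi (fun t => f (op s t))).

(* canonical image of delta_s in l^1(S)^** *)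
Definition evBD (s : S) : BD := fun f => f s.

(* augmentation character phi of l^1(S), as an element of l^oo(S) *)
Definition augm : S -> K := fun _ => 1.

(* Representations of elements of the projective tensor product A (x)_p A,
   A = l^1(S)^**: u = sum_n a_n (x) b_n with sum_n ||a_n|| ||b_n|| < oo. *)
Definition TP := nat -> BD * BD.

Definition isTP (u : TP) : Prop :=
  (forall n, isBD (u n).1 /\ isBD (u n).2) /\
  exists (c d : nat -> K) (M : K),
    (forall n, 0 <= c n /\ 0 <= d n /\ normBD_le (u n).1 (c n) /\ normBD_le (u n).2 (d n))
    /\ forall N, \sum_(n < N) c n * d n <= M.

(* bounded bilinear forms on A x A, i.e. the dual of A (x)_p A *)
Definition isBB (B : BD -> BD -> K) : Prop :=
  (forall (k : K) (a a' b : BD), isBD a -> isBD a' -> isBD b ->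
      B (fun f => k * a f + a' f) b = k * B a b + B a' b)
  /\ (forall (k : K) (a b b' : BD), isBD a -> isBD b -> isBD b' ->
      B a (fun f => k * b f + b' f) = k * B a b + B a b')
  /\ exists M : K, forall (a b : BD) (ca cb : K), isBD a -> isBD b ->
      normBD_le a ca -> normBD_le b cb -> `|B a b| <= M * ca * cb.

(* equality in A (x)_p A : same pairing with every bounded bilinear form *)
Definition eqTP (u v : TP) : Prop :=
  forall B, isBB B -> exists l : K,
    (fun N => \sum_(n < N) B (u n).1 (u n).2) @ \oo --> l /\
    (fun N => \sum_(n < N) B (v n).1 (v n).2) @ \oo --> l.

Definition actL (a : BD) (u : TP) : TP := fun n => (arens a (u n).1, (u n).2).
Definition actR (u : TP) (a : BD) : TP := fun n => ((u n).1, arens (u n).2 a).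

Definition piA (u : TP) : BD :=
  fun f => limn (fun N => \sum_(n < N) arens (u n).1 (u n).2 f).

Definition bidual_pseudo_contractible : Prop :=
  exists (I : Type) (le : I -> I -> Prop) (m : I -> TP),
    [/\ inhabited I, (forall i, le i i),
        (forall i j k, le i j -> le j k -> le i k) &
        (forall i j, exists k, le i k /\ le j k)]
    /\ (forall i, isTP (m i))
    /\ (forall a, isBD a -> forall i, eqTP (actL a (m i)) (actR (m i) a))
    /\ (forall a, isBD a -> forall eps : K, 0 < eps ->
          exists i0, forall i, le i0 i ->
            normBD_le (fun f => arens (piA (m i)) a f - a f) eps).

Definition left_amenable : Prop :=
  exists m : BD, isBD m /\ (forall s, eqBD (arens (evBD s) m) m)
                 /\ normBD_eq m 1 /\ m augm = 1.

Definition right_amenable : Prop :=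
  exists m : BD, isBD m /\ (forall s, eqBD (arens m (evBD s)) m)
                 /\ normBD_eq m 1 /\ m augm = 1.

Definition amenable : Prop := left_amenable /\ right_amenable.

End Defs.

(* Main.v *)
Require Import Defs.
From mathcomp Require Import all_boot all_order all_algebra.
From mathcomp Require Import all_classical all_reals all_analysis.
From mathcomp Require Import complex.
From mathcomp Require Import ring lra.
Import Order.TTheory GRing.Theory Num.Theory.
Local Open Scope ring_scope.
Local Open Scope classical_set_scope.

Section CLem. Variable R : realType.
Local Open Scope complex_scope.
Implicit Types z w : R[i].
Lemma c1 : (1:R)%:C = 1 :> R[i]. Proof. by []. Qed.
Lemma c2 (x : R) : `|x%:C| = `|x|%:C :> R[i].
Proof. by simpc; rewrite expr0n addr0 sqrtr_sqr. Qed.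
Lemma c3 (k : R) z w : complex.Re (k%:C * z + w) = k * complex.Re z + complex.Re w.
Proof. by case: z => a b; case: w => c d; simpc. Qed.
Lemma c4 z c : `|z| <= c -> `|complex.Re z| <= complex.Re c.
Proof.
move=> h; have := le_trans (normc_ge_Re z) h; rewrite lecE => /andP[_]; by [].
Qed.
Lemma c5 : `|'i| = 1 :> R[i].
Proof. by simpc; rewrite expr0n expr1n add0r sqrtr1. Qed.
Lemma c6 z c : `|z| <= c -> `|complex.Im z| <= complex.Re c.
Proof.
move=> h; rewrite -normrN -ReiNIm; apply: c4; by rewrite normrM c5 mulr1.
Qed.
Lemma c7 (k : R) z : complex.Re (z * k%:C) = complex.Re z * k.
Proof. by case: z => a b; simpc. Qed.
Lemma c8 (a b : R) : complex.Re (a%:C + 'i * b%:C) = a.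
Proof. by simpc. Qed.
Lemma c9 (a b : R) : complex.Im (a%:C + 'i * b%:C) = b.
Proof. by simpc. Qed.
Lemma c10 z w k : complex.Re (k * z + w) = complex.Re k * complex.Re z + (- complex.Im k * complex.Im z + complex.Re w).
Proof. case: z => a b; case: w => c d; case: k => e f; simpc => /=; ring. Qed.
Lemma c11 z w k : complex.Im (k * z + w) = complex.Re k * complex.Im z + (complex.Im k * complex.Re z + complex.Im w).
Proof. case: z => a b; case: w => c d; case: k => e f; simpc => /=; ring. Qed.

Lemma ceq z w : complex.Re z = complex.Re w -> complex.Im z = complex.Im w -> z = w.
Proof. by case: z => a b; case: w => c d /= -> ->. Qed.
Lemma c12 z : 0 <= z -> z = (complex.Re z)%:C.
Proof. by move=> h; apply: ceq => //=; rewrite ger0_Im. Qed.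
End CLem.

Set Implicit Arguments. Unset Strict Implicit.
Section DayReal.
Variables (R : realType) (S : Type) (J : Type) (hh : J -> S -> S).
Variable Nr : (S -> R) -> R.
Variable s0 : S.
Definition rb (u : S -> R) := exists B : R, forall s, `|u s| <= B.
Hypothesis Nr_lin : forall k u v, rb u -> rb v ->
  Nr (fun s => k * u s + v s) = k * Nr u + Nr v.
Variable Kr : R.
Hypothesis Nr_bnd : forall u B, 0 <= B -> (forall s, `|u s| <= B) -> `|Nr u| <= Kr * B.
Hypothesis Nr_inv : forall j u, rb u -> Nr (fun t => u (hh j t)) = Nr u.
Hypothesis Nr_one : Nr (fun _ => 1) = 1.

Lemma rbD u v : rb u -> rb v -> rb (fun s => u s + v s).
Proof.
move=> [a ha] [b hb]; exists (a + b) => s.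
by rewrite (le_trans (ler_normD _ _)) // lerD.
Qed.

Lemma rbZ k u : rb u -> rb (fun s => k * u s).
Proof.
move=> [a ha]; exists (`|k| * a) => s.
by rewrite normrM ler_wpM2l.
Qed.

Lemma rbc c : rb (fun _ => c).
Proof. by exists `|c|. Qed.

Lemma rb_le u v : rb v -> (forall s, 0 <= u s <= v s) -> rb u.
Proof.
move=> [b hb] h; exists b => s; have /andP[h1 h2] := h s.
rewrite ger0_norm //; apply: le_trans h2 _; exact: le_trans (ler_norm _) (hb s).
Qed.

Lemma rbN u : rb u -> rb (fun s => - u s).
Proof. by move=> [a ha]; exists a => s; rewrite normrN. Qed.

Lemma rb_comp u j : rb u -> rb (fun t => u (hh j t)).
Proof. by move=> [a ha]; exists a. Qed.

Lemma NrL k u v w : rb u -> rb v -> (forall s, w s = k * u s + v s) ->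
  Nr w = k * Nr u + Nr v.
Proof.
move=> hu hv hw; rewrite -Nr_lin //; congr Nr; apply: funext => s; exact: hw.
Qed.

Lemma Nr0 : Nr (fun _ => 0) = 0.
Proof.
have e : Nr (fun _ => 0) = 1 * Nr (fun _ => 0) + Nr (fun _ => 0).
  by apply: NrL; [exact: rbc | exact: rbc | move=> s; rewrite mul1r addr0].
lra.
Qed.

Lemma NrD u v : rb u -> rb v -> Nr (fun s => u s + v s) = Nr u + Nr v.
Proof. move=> hu hv; rewrite (@NrL 1 u v) ?mul1r // => s; by rewrite mul1r. Qed.

Lemma NrZ k u : rb u -> Nr (fun s => k * u s) = k * Nr u.
Proof.
move=> hu; rewrite (@NrL k u (fun _ => 0)) ?Nr0 ?addr0 //; first exact: rbc.
by move=> s; rewrite addr0.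
Qed.

Lemma NrB u v : rb u -> rb v -> Nr (fun s => u s - v s) = Nr u - Nr v.
Proof.
move=> hu hv; rewrite (@NrL (-1) v u) //; first ring.
move=> s; ring.
Qed.

Definition Pset (g : S -> R) := [set x | exists u, (forall s, 0 <= u s <= g s) /\ x = Nr u].
Definition P (g : S -> R) := sup (Pset g).

Definition pos (g : S -> R) := (forall s, 0 <= g s) /\ rb g.

Lemma pos0 g : pos g -> forall s, 0 <= g s.
Proof. by case. Qed.

Lemma Pset0 g : pos g -> Pset g (Nr (fun _ => 0)).
Proof. by move=> [h _]; exists (fun _ => 0); split => // s; rewrite lexx h. Qed.

Lemma Pset_sup g : pos g -> has_sup (Pset g).
Proof.
move=> hg; split; first by exists (Nr (fun _ => 0)); exact: Pset0.
case: hg => hg0 [b hb]; exists (Kr * b) => x [u [hu ->]].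
apply: le_trans (ler_norm _) _; apply: Nr_bnd.
  exact: le_trans (hb s0).
move=> s; have /andP[h1 h2] := hu s; rewrite ger0_norm //.
exact: le_trans h2 (le_trans (ler_norm _) (hb s)).
Qed.

Lemma P_ub g u : pos g -> (forall s, 0 <= u s <= g s) -> Nr u <= P g.
Proof. by move=> hg hu; have := sup_upper_bound (@Pset_sup g hg); apply; exists u. Qed.

Lemma P_le g X : pos g -> (forall u, (forall s, 0 <= u s <= g s) -> Nr u <= X) -> P g <= X.
Proof.
move=> hg h; apply: ge_sup; first by exists (Nr (fun _ => 0)); exact: Pset0.
by move=> x [u [hu ->]]; apply: h.
Qed.

Lemma P_ge0 g : pos g -> 0 <= P g.
Proof. by move=> hg; rewrite -Nr0; apply: P_ub => // s; rewrite lexx; case: hg => h _; exact: h. Qed.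

Lemma Pext g g' : (forall s, g s = g' s) -> P g = P g'.
Proof. by move=> h; congr P; apply: funext. Qed.

Lemma posD g1 g2 : pos g1 -> pos g2 -> pos (fun s => g1 s + g2 s).
Proof. by move=> [h1 b1] [h2 b2]; split; [move=> s; exact: addr_ge0 | exact: rbD]. Qed.

Lemma posZ k g : 0 <= k -> pos g -> pos (fun s => k * g s).
Proof. by move=> hk [h1 b1]; split; [move=> s; exact: mulr_ge0 | exact: rbZ]. Qed.

Lemma posc c : 0 <= c -> pos (fun _ => c).
Proof. by move=> hc; split => //; exact: rbc. Qed.

Lemma pos_comp j g : pos g -> pos (fun t => g (hh j t)).
Proof. by move=> [h1 b1]; split; [move=> s; exact: h1 | exact: rb_comp]. Qed.

Lemma rb_of_le u g : pos g -> (forall s, 0 <= u s <= g s) -> rb u.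
Proof. by move=> [_ hg] hu; exact: rb_le hu. Qed.

Lemma P_add g1 g2 : pos g1 -> pos g2 -> P (fun s => g1 s + g2 s) = P g1 + P g2.
Proof.
move=> h1 h2; have h12 := posD h1 h2.
apply/eqP; rewrite eq_le; apply/andP; split.
  apply: P_le => // u hu.
  pose u1 := fun s => if u s <= g1 s then u s else g1 s.
  pose u2 := fun s => u s - u1 s.
  have hu1 : forall s, 0 <= u1 s <= g1 s.
    move=> s; rewrite /u1; have /andP[a b] := hu s; case: ifP => c.
      by rewrite a c.
    by rewrite lexx andbT (pos0 h1).
  have hu2 : forall s, 0 <= u2 s <= g2 s.
    move=> s; rewrite /u2 /u1; have /andP[a b] := hu s; case: ifP => c.
      by rewrite subrr lexx (pos0 h2).
    move/negbT: c; rewrite -ltNge => c; apply/andP; split; lra.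
  have -> : Nr u = Nr u1 + Nr u2.
    rewrite -NrD; [| exact: rb_of_le hu1 | exact: rb_of_le hu2].
    by congr Nr; apply: funext => s; rewrite /u2 addrC subrK.
  by apply: lerD; apply: P_ub.
have : P g1 <= P (fun s => g1 s + g2 s) - P g2.
  apply: P_le => // u1 hu1.
  have : P g2 <= P (fun s => g1 s + g2 s) - Nr u1.
    apply: P_le => // u2 hu2.
    have : Nr (fun s => u1 s + u2 s) <= P (fun s => g1 s + g2 s).
      apply: P_ub => // s; have /andP[a b] := hu1 s; have /andP[c d] := hu2 s.
      apply/andP; split; lra.
    rewrite NrD; [lra | exact: rb_of_le hu1 | exact: rb_of_le hu2].
  lra.
lra.
Qed.

Lemma P0 : P (fun _ => 0) = 0.
Proof.
apply/eqP; rewrite eq_le; apply/andP; split; last by apply: P_ge0; exact: posc.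
apply: P_le; first exact: posc.
move=> u hu; have -> : u = (fun _ => 0).
  by apply: funext => s; have /andP[a b] := hu s; apply/eqP; rewrite eq_le a b.
by rewrite Nr0.
Qed.

Lemma P_scale k g : 0 <= k -> pos g -> P (fun s => k * g s) = k * P g.
Proof.
move=> hk hg; have [->|kpos] := eqVneq k 0.
  rewrite mul0r -[RHS]P0; apply: Pext => s; by rewrite mul0r.
have k0 : 0 < k by rewrite lt_def kpos hk.
have hkg := posZ hk hg.
apply/eqP; rewrite eq_le; apply/andP; split.
  apply: P_le => // u hu.
  have hu' : forall s, 0 <= k^-1 * u s <= g s.
    move=> s; have /andP[a b] := hu s; apply/andP; split.
      by rewrite mulr_ge0 // invr_ge0.
    by rewrite ler_pdivrMl.
  have -> : Nr u = k * Nr (fun s => k^-1 * u s).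
    rewrite NrZ; last exact: rb_of_le hu.
    by rewrite mulrA mulfV // mul1r.
  by rewrite ler_wpM2l //; apply: P_ub.
rewrite -ler_pdivlMl //; apply: P_le => // u hu.
rewrite ler_pdivlMl // -NrZ; last exact: rb_of_le hu.
apply: P_ub => // s; have /andP[a b] := hu s; apply/andP; split.
  exact: mulr_ge0.
by rewrite ler_wpM2l.
Qed.

Lemma P_inv j g : pos g -> P (fun t => g (hh j t)) = P g.
Proof.
move=> hg.
have ge : forall g, pos g -> P g <= P (fun t => g (hh j t)).
  move=> g' hg'; apply: P_le => // u hu.
  rewrite -(Nr_inv j); last exact: rb_of_le hu.
  by apply: P_ub; [exact: pos_comp | move=> s; exact: hu].
case: (hg) => hg0 [b hb].
have hg' : pos (fun s => b - g s).
  split; last by apply: rbD; [exact: rbc | apply: rbN; case: hg].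
  move=> s; rewrite subr_ge0; exact: le_trans (ler_norm _) (hb s).
have e1 : P (fun t => g (hh j t)) + P (fun t => b - g (hh j t)) = P (fun _ => b).
  rewrite -P_add; [| exact: pos_comp | exact: (pos_comp j hg')].
  by apply: Pext => s; rewrite addrC subrK.
have e2 : P g + P (fun s => b - g s) = P (fun _ => b).
  by rewrite -P_add //; apply: Pext => s; rewrite addrC subrK.
have := ge _ hg; have := ge _ hg'; move=> /= a1 a2.
apply/eqP; rewrite eq_le a2 andbT; lra.
Qed.


Definition fp (f : S -> R) := fun s => if 0 <= f s then f s else 0.
Definition fm (f : S -> R) := fun s => if 0 <= f s then 0 else - f s.
Definition Q f := P (fp f) - P (fm f).

Lemma pos_fp f : rb f -> pos (fp f).
Proof.
move=> [b hb]; split.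
  by move=> s; rewrite /fp; case: ifP.
exists b => s; rewrite /fp; case: ifP => _; first exact: hb.
by rewrite normr0; apply: le_trans (hb s).
Qed.

Lemma pos_fm f : rb f -> pos (fm f).
Proof.
move=> [b hb]; split.
  by move=> s; rewrite /fm; case: ifP => // /negbT; rewrite -ltNge oppr_ge0 => /ltW.
exists b => s; rewrite /fm; case: ifP => _; last by rewrite normrN.
by rewrite normr0; apply: le_trans (hb s).
Qed.

Lemma fpm f s : f s = fp f s - fm f s.
Proof. by rewrite /fp /fm; case: ifP => _; rewrite ?subr0 ?sub0r ?opprK. Qed.

Lemma Q_decomp f u v : pos u -> pos v -> (forall s, f s = u s - v s) ->
  Q f = P u - P v.
Proof.
move=> hu hv h.
have hf : rb f.
  have : rb (fun s => u s - v s) by apply: rbD; [case: hu | apply: rbN; case: hv].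
  by move=> [b hb]; exists b => s; rewrite h.
have e : P (fp f) + P v = P (fm f) + P u.
  rewrite -!P_add //; try exact: pos_fp; try exact: pos_fm.
  apply: Pext => s; have := fpm f s; rewrite h => e; lra.
rewrite /Q; lra.
Qed.

Lemma Qext f g : (forall s, f s = g s) -> Q f = Q g.
Proof. by move=> h; congr Q; apply: funext. Qed.

Lemma Q_lin k f g : rb f -> rb g -> Q (fun s => k * f s + g s) = k * Q f + Q g.
Proof.
move=> hf hg; have pf := pos_fp hf; have mf := pos_fm hf; have pg := pos_fp hg; have mg := pos_fm hg.
have [hk|hk] := lerP 0 k.
  rewrite (@Q_decomp _ (fun s => k * fp f s + fp g s) (fun s => k * fm f s + fm g s)).
  - rewrite !P_add ?P_scale //; try exact: posZ.
    rewrite /Q; ring.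
  - by apply: posD => //; exact: posZ.
  - by apply: posD => //; exact: posZ.
  - by move=> s; rewrite (fpm f s) (fpm g s); ring.
have hk' : 0 <= - k by rewrite oppr_ge0 ltW.
rewrite (@Q_decomp _ (fun s => - k * fm f s + fp g s) (fun s => - k * fp f s + fm g s)).
- rewrite !P_add ?P_scale //; try exact: posZ.
  rewrite /Q; ring.
- by apply: posD => //; exact: posZ.
- by apply: posD => //; exact: posZ.
- by move=> s; rewrite (fpm f s) (fpm g s); ring.
Qed.

Lemma Q_pos f : pos f -> Q f = P f.
Proof.
move=> hf; rewrite (@Q_decomp _ f (fun _ => 0)) ?P0 ?subr0 //; first exact: posc.
by move=> s; rewrite subr0.
Qed.

Lemma Q_mono f g : rb f -> rb g -> (forall s, f s <= g s) -> Q f <= Q g.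
Proof.
move=> hf hg h.
have hgf : pos (fun s => g s - f s).
  split; first by move=> s; rewrite subr_ge0.
  by apply: rbD => //; exact: rbN.
have : Q g = 1 * Q (fun s => g s - f s) + Q f.
  rewrite -Q_lin //; last by case: hgf.
  by apply: Qext => s; ring.
rewrite (Q_pos hgf) => ->; have := P_ge0 hgf; lra.
Qed.

Lemma Q_inv j f : rb f -> Q (fun t => f (hh j t)) = Q f.
Proof.
move=> hf; rewrite (@Q_decomp _ (fun t => fp f (hh j t)) (fun t => fm f (hh j t))).
- by rewrite !P_inv //; [exact: pos_fm | exact: pos_fp].
- exact: (pos_comp j (pos_fp hf)).
- exact: (pos_comp j (pos_fm hf)).
- by move=> s; rewrite -fpm.
Qed.

Lemma Q_const c : Q (fun _ => c) = c * P (fun _ => 1).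
Proof.
have := @Q_lin c (fun _ => 1) (fun _ => 0) (rbc 1) (rbc 0).
rewrite (Q_pos (@posc 1 ler01)) (Q_pos (@posc 0 (lexx 0))) P0.
move=> e; rewrite -[RHS]addr0 -e; apply: Qext => s; ring.
Qed.

Lemma P1_ge1 : 1 <= P (fun _ => 1).
Proof.
have := @P_ub (fun _ => 1) (fun _ => 1) (posc ler01); rewrite Nr_one; apply.
by move=> s; rewrite ler01 lexx.
Qed.


Definition Qn f := Q f / P (fun _ => 1).

Lemma P1_neq0 : P (fun _ => 1) != 0.
Proof. by have := P1_ge1; apply: contraTneq => ->; rewrite ler10. Qed.

Lemma Qn_lin k f g : rb f -> rb g -> Qn (fun s => k * f s + g s) = k * Qn f + Qn g.
Proof. by move=> hf hg; rewrite /Qn Q_lin // mulrDl mulrA. Qed.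

Lemma Qn_mono f g : rb f -> rb g -> (forall s, f s <= g s) -> Qn f <= Qn g.
Proof.
move=> hf hg h; rewrite /Qn ler_wpM2r ?Q_mono //.
by rewrite invr_ge0; apply: le_trans P1_ge1.
Qed.

Lemma Qn_inv j f : rb f -> Qn (fun t => f (hh j t)) = Qn f.
Proof. by move=> hf; rewrite /Qn Q_inv. Qed.

Lemma Qn_const c : Qn (fun _ => c) = c.
Proof. by rewrite /Qn Q_const mulfK // P1_neq0. Qed.

Lemma Qnext f g : (forall s, f s = g s) -> Qn f = Qn g.
Proof. by move=> h; congr Qn; apply: funext. Qed.

Local Open Scope complex_scope.

Definition M (f : S -> R[i]) : R[i] :=
  (Qn (fun s => complex.Re (f s)))%:C + 'i * (Qn (fun s => complex.Im (f s)))%:C.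

Lemma rbRe f : bounded f -> rb (fun s => complex.Re (f s)).
Proof. by move=> [c hc]; exists (complex.Re c) => s; apply: c4; exact: hc. Qed.

Lemma rbIm f : bounded f -> rb (fun s => complex.Im (f s)).
Proof. by move=> [c hc]; exists (complex.Re c) => s; apply: c6; exact: hc. Qed.

Lemma M_lin k f g : bounded f -> bounded g ->
  M (fun s => k * f s + g s) = k * M f + M g.
Proof.
move=> hf hg; have rf := rbRe hf; have jf := rbIm hf; have rg := rbRe hg; have jg := rbIm hg.
rewrite /M.
rewrite (@Qnext _ (fun s => complex.Re k * complex.Re (f s) + (- complex.Im k * complex.Im (f s) + complex.Re (g s)))); last by move=> s; rewrite c10.
rewrite (@Qnext (fun s => complex.Im (k * f s + g s)) (fun s => complex.Re k * complex.Im (f s) + (complex.Im k * complex.Re (f s) + complex.Im (g s)))); last by move=> s; rewrite c11.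
rewrite !Qn_lin //; try (apply: rbD => //; exact: rbZ).
apply: ceq; rewrite ?c10 ?c11 ?c8 ?c9 /=; ring.
Qed.

Lemma M_inv j f : bounded f -> M (fun t => f (hh j t)) = M f.
Proof.
move=> hf; rewrite /M (Qn_inv j (rbRe hf)).
by rewrite (Qn_inv j (rbIm hf)).
Qed.

Lemma M_augm : M (@augm R[i] S) = 1.
Proof.
rewrite /M (@Qnext (fun s => complex.Re (@augm R[i] S s)) (fun _ => 1)) //.
rewrite (@Qnext (fun s => complex.Im (@augm R[i] S s)) (fun _ => 0)) // !Qn_const.
by apply: ceq; rewrite ?c8 ?c9.
Qed.

Lemma M0 : M (fun _ => 0) = 0.
Proof.
have e : forall f, (forall s, f s = 0) -> Qn f = 0 by move=> f h; rewrite (Qnext h) Qn_const.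
rewrite /M !e //.
by apply: ceq; rewrite ?c8 ?c9.
Qed.

Lemma M_norm : normBD_le M 1.
Proof.
move=> f c' hc hf.
have bf : bounded f by exists c'.
set z := M f; set w := z^*%C.
have bh : bounded (fun s => w * f s + 0).
  by exists (`|w| * c') => s; rewrite addr0 normrM ler_wpM2l.
have e1 : M (fun s => w * f s + 0) = `|z| ^+ 2.
  rewrite M_lin //; last by exists 0 => s; rewrite normr0.
  by rewrite M0 addr0 sqr_normc mulrC.
set nz := complex.Re `|z|.
set r := complex.Re c'.
have ez : `|z| = nz%:C by apply: c12.
have ec : c' = r%:C by apply: c12.
have r0 : 0 <= r by rewrite -lecR -ec.
have nz0 : 0 <= nz by rewrite -lecR -ez; exact: normr_ge0.
have hle : forall s, complex.Re (w * f s + 0) <= nz * r.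
  move=> s; apply: le_trans (ler_norm _) _.
  have : `|w * f s + 0| <= `|z| * c'.
    by rewrite addr0 normrM normcJ ler_wpM2l.
  move/c4; rewrite ez ec -rmorphM /=; by [].
have := @Qn_mono _ (fun _ => nz * r) (rbRe bh) (rbc _) hle.
rewrite Qn_const.
have -> : Qn (fun s => complex.Re (w * f s + 0)) = complex.Re (M (fun s => w * f s + 0)) by rewrite /M c8.
rewrite e1 ez -rmorphXn /= => h.
rewrite mul1r ec lecR; nra.
Qed.

Lemma day_mean : exists M : BD R[i] S, isBD M /\
  (forall j f, bounded f -> M (fun t => f (hh j t)) = M f) /\
  normBD_eq M 1 /\ M (@augm R[i] S) = 1.
Proof.
exists M; split; [split; [move=> k f g hf hg; exact: M_lin | exists 1; exact: M_norm]|].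
split; first exact: M_inv.
split; last exact: M_augm.
split; first exact: M_norm.
move=> c' hc'; have := hc' (@augm R[i] S) 1 ler01.
rewrite M_augm normr1 mulr1; apply.
by move=> s; rewrite normr1.
Qed.

End DayReal.

Unset Implicit Arguments. Set Strict Implicit.

Import numFieldNormedType.Exports.
Local Open Scope complex_scope.

Section Ser.
Variables (C : numFieldType) (S : Type).

Lemma lim_norm_le (u : nat -> C) (X : C) : cvgn u -> (forall N, `|u N| <= X) ->
  `|limn u| <= X.
Proof.
move=> hu hb; apply/ler_addgt0Pr => e e0.
move/cvgr_dist_lt: hu => /(_ e e0) -[N _ hN].
have hN' := hN N (leqnn N).
rewrite -(subrK (u N) (limn u)); apply: le_trans (ler_normD _ _) _.
by rewrite addrC lerD // ltW.
Qed.


Lemma series_isBD (p q : nat -> BD C S) (c d : nat -> C) (Mb : C) :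
  (forall n, isBD (p n) /\ isBD (q n)) ->
  (forall n, 0 <= c n /\ 0 <= d n /\ normBD_le (p n) (c n) /\ normBD_le (q n) (d n)) ->
  (forall N, \sum_(n < N) c n * d n <= Mb) ->
  (forall f, bounded f -> cvgn (fun N => \sum_(n < N) p n f * q n (@augm C S))) ->
  isBD (fun f => limn (fun N => \sum_(n < N) p n f * q n (@augm C S))).
Proof.
move=> hpq hcd hM hcv; split.
  move=> k f h hf hh.
  have -> : (fun N => \sum_(n < N) p n (fun s => k * f s + h s) * q n (@augm C S)) =
     (fun N => k * (\sum_(n < N) p n f * q n (@augm C S)) + \sum_(n < N) p n h * q n (@augm C S)).
    apply: funext => N; rewrite mulr_sumr -big_split; apply: eq_bigr => n _.
    have [[pl _] _] := hpq n; by rewrite pl // mulrDl mulrA.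
  set A := (fun N => \sum_(n < N) p n f * q n (@augm C S)).
  set B := (fun N => \sum_(n < N) p n h * q n (@augm C S)).
  have H : (fun N => k * A N + B N) @ \oo --> k * limn A + limn B.
    apply: cvgD; [exact: cvgMl_tmp (hcv f hf) | exact: hcv].
  by rewrite -(norm_cvg_lim H).
exists Mb => f c' hc' hf; apply: lim_norm_le; first by apply: hcv; exists c'.
move=> N; apply: le_trans (ler_norm_sum _ _ _) _.
apply: le_trans (_ : \sum_(n < N) c n * d n * c' <= _).
  apply: ler_sum => n _; have [c0 [d0 [hp hq]]] := hcd n.
  rewrite normrM.
  have h1 := hp f c' hc' hf.
  have h2 := hq (@augm C S) 1 ler01 (fun s => eq_ind_r (fun x => x <= 1) (lexx 1) (normr1 _)).
  have := ler_pM (normr_ge0 _) (normr_ge0 _) h1 h2.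
  by rewrite mulr1 mulrAC.
by rewrite -mulr_suml ler_wpM2r.
Qed.


Lemma evBD_isBD s : isBD (@evBD C S s).
Proof.
split; first by [].
exists 1 => f c' hc' hf; rewrite mul1r; exact: hf.
Qed.

Lemma bounded_ge0 (s0 : S) (f : S -> C) c : supnorm_le f c -> 0 <= c.
Proof. by move=> h; exact: le_trans (normr_ge0 _) (h s0). Qed.

Lemma isBB_fg (s0 : S) (f g : S -> C) : bounded f -> bounded g ->
  isBB (fun x y : BD C S => x f * y g).
Proof.
move=> [cf hf] [cg hg]; split; [|split].
- by move=> k a a' b _ _ _ /=; rewrite mulrDl mulrA.
- by move=> k a b b' _ _ _ /=; rewrite mulrDr mulrCA.
exists (cf * cg) => a b ca cb _ _ ha hb.
have cf0 := bounded_ge0 s0 _ _ hf; have cg0 := bounded_ge0 s0 _ _ hg.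
rewrite normrM; have := ler_pM (normr_ge0 _) (normr_ge0 _) (ha f cf cf0 hf) (hb g cg cg0 hg).
by have -> : cf * cg * ca * cb = ca * cf * (cb * cg) by ring.
Qed.

Lemma isBD_scale (L : BD C S) k : isBD L -> isBD (fun f => L f * k).
Proof.
move=> [hl [c hc]]; split.
  by move=> k' f g hf hg; rewrite hl // mulrDl mulrA.
exists (c * `|k|) => f c' hc' hf; rewrite normrM.
rewrite mulrAC ler_wpM2r //; exact: hc.
Qed.

Lemma isBD0 (a : BD C S) : isBD a -> a (fun _ => 0) = 0.
Proof.
move=> [hl _].
have b0 : bounded (fun _ : S => (0 : C)) by exists 0 => s; rewrite normr0.
have e := hl 1 _ _ b0 b0.
have e2 : (fun _ : S => 1 * (0 : C) + 0) = (fun _ => 0) by apply: funext => s; rewrite mul1r addr0.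
rewrite e2 mul1r in e; set x := a _ in e *.
have : x + x - x = x - x by rewrite -e.
by rewrite addrK subrr.
Qed.

Lemma isBDc (a : BD C S) k : isBD a -> a (fun _ => k) = k * a (@augm C S).
Proof.
move=> ha; have [hl _] := ha.
have b0 : bounded (fun _ : S => (0 : C)) by exists 0 => s; rewrite normr0.
have b1 : bounded (@augm C S) by exists 1 => s; rewrite normr1.
have := hl k _ _ b1 b0; rewrite isBD0 // addr0 => <-.
by congr a; apply: funext => s; rewrite /augm mulr1 addr0.
Qed.

Lemma cvg_swap (x y : nat -> C) (l : C) :
  (fun N => \sum_(n < N) x n * y n) @ \oo --> l ->
  (fun N => \sum_(n < N) y n * x n) @ \oo --> l.
Proof.
have -> : (fun N => \sum_(n < N) y n * x n) = (fun N => \sum_(n < N) x n * y n) => //.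
by apply: funext => N; apply: eq_bigr => n _; rewrite mulrC.
Qed.

End Ser.

Lemma c2' (R : realType) (x : R) : `|x%:C| = `|x|%:C :> R[i].
Proof. by simpc; rewrite expr0n addr0 sqrtr_sqr. Qed.

Lemma c13 (R : realType) (k : R) (z : R[i]) : complex.Re (z * k%:C) = complex.Re z * k.
Proof. by case: z => a b; simpc => /=; ring. Qed.

Lemma day_complex (R : realType) (S J : Type) (hh : J -> S -> S) (s0 : S)
  (N : BD R[i] S) : isBD N -> N (@augm R[i] S) = 1 ->
  (forall j f, bounded f -> N (fun t => f (hh j t)) = N f) ->
  exists M : BD R[i] S, isBD M /\
  (forall j f, bounded f -> M (fun t => f (hh j t)) = M f) /\
  normBD_eq M 1 /\ M (@augm R[i] S) = 1.
Proof.
move=> [Nlin [Kc NK]] N1 Ninv.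
pose Nr := fun u : S -> R => complex.Re (N (fun s => (u s)%:C)).
have bemb : forall u : S -> R, rb u -> bounded (fun s => (u s)%:C).
  move=> u [B hB]; exists B%:C => s; by rewrite c2' lecR.
apply: (@day_mean R S J hh Nr s0 _ (complex.Re Kc)).
- move=> k u v hu hv; rewrite /Nr -c3; congr complex.Re.
  rewrite -Nlin; try exact: bemb.
  by congr N; apply: funext => s; rewrite rmorphD rmorphM.
- move=> u B hB hu; rewrite /Nr.
  have h := NK (fun s => (u s)%:C) B%:C.
  have : `|N (fun s => (u s)%:C)| <= Kc * B%:C.
    by apply: h; [rewrite lecR | move=> s; rewrite c2' lecR].
  by move/c4; rewrite c13.
- move=> j u hu; rewrite /Nr; congr complex.Re; exact: (Ninv j _ (bemb _ hu)).
- by rewrite /Nr N1.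
Qed.

Theorem mainTheorem2 (R : realType) (S : Type) (op : S -> S -> S)
  (op_assoc : forall x y z, op x (op y z) = op (op x y) z)
  (S_nonempty : inhabited S) :
  @bidual_pseudo_contractible R[i] S op -> @amenable R[i] S op.
Proof.
move=> [I [le [m [[_ lerefl _ _] [hTP [heq happ]]]]]].
case: S_nonempty => s0.
have h2 : (0 : R[i]) < 1 / 2 by rewrite divr_gt0 ?ltr01 ?ltr0n.
have [i0 hi0] := happ _ (evBD_isBD _ _ s0) _ h2.
have hn := hi0 i0 (lerefl i0).
set u := m i0 in hn heq.
have [hBD [c [d [Mb [hcd hsum]]]]] := hTP i0.
set A := @augm R[i] S.
have bA : bounded A by exists 1 => s; rewrite normr1.
pose a n := (u n).1; pose b n := (u n).2.
pose L := fun f => limn (fun N => \sum_(n < N) a n f * b n A).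
pose R' := fun f => limn (fun N => \sum_(n < N) b n f * a n A).
have hL : forall s f, bounded f ->
   (fun N => \sum_(n < N) a n f * b n A) @ \oo --> L f /\ L (fun t => f (op s t)) = L f.
  move=> s f hf.
  have [l [h1 h2']] := heq (evBD s) (evBD_isBD _ _ s) i0 (fun x y => x f * y A) (isBB_fg _ _ s0 f A hf bA).
  have h1' : (fun N => \sum_(n < N) a n (fun t => f (op s t)) * b n A) @ \oo --> l := h1.
  have h2'' : (fun N => \sum_(n < N) a n f * b n A) @ \oo --> l := h2'.
  have e1 : L f = l := norm_cvg_lim h2''.
  have e2 : L (fun t => f (op s t)) = l := norm_cvg_lim h1'.
  by rewrite e1 e2.
have hR : forall s f, bounded f ->
   (fun N => \sum_(n < N) b n f * a n A) @ \oo --> R' f /\ R' (fun t => f (op t s)) = R' f.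
  move=> s f hf.
  have [l [h1 h2']] := heq (evBD s) (evBD_isBD _ _ s) i0 (fun x y => x A * y f) (isBB_fg _ _ s0 A f bA hf).
  have h1' : (fun N => \sum_(n < N) a n A * b n f) @ \oo --> l := h1.
  have h2'' : (fun N => \sum_(n < N) a n A * b n (fun t => f (op t s))) @ \oo --> l := h2'.
  have e1 : R' f = l := norm_cvg_lim (cvg_swap _ (fun n => a n A) (fun n => b n f) l h1').
  have e2 : R' (fun t => f (op t s)) = l := norm_cvg_lim (cvg_swap _ (fun n => a n A) (fun n => b n (fun t => f (op t s))) l h2'').
  by rewrite e1 e2; split => //; exact: (cvg_swap _ (fun n => a n A) (fun n => b n f) l h1').
have isL : isBD L.
  apply: (series_isBD _ _ a b c d Mb) => //.
  by move=> f hf; exact: cvgP (hL s0 f hf).1.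
have isR : isBD R'.
  apply: (series_isBD _ _ b a d c Mb).
  - by move=> n; have [x y] := hBD n.
  - by move=> n; have [x [y [z w]]] := hcd n.
  - move=> N; apply: le_trans (hsum N); rewrite le_eqVlt; apply/orP; left; apply/eqP.
    by apply: eq_bigr => n _; exact: mulrC.
  - by move=> f hf; exact: cvgP (hR s0 f hf).1.
have ePL : piA op u A = L A.
  rewrite /piA /L.
  have e : (fun N => \sum_(n < N) arens op (u n).1 (u n).2 A) = (fun N => \sum_(n < N) a n A * b n A).
    apply: funext => N; apply: eq_bigr => n _.
    have -> : arens op (u n).1 (u n).2 A = a n (fun _ => b n A) by [].
    by rewrite (isBDc _ _ (a n) (b n A) (hBD n).1) mulrC.
  by rewrite e.
have eRL : R' A = L A.
  rewrite /R' /L.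
  have e : (fun N => \sum_(n < N) b n A * a n A) = (fun N => \sum_(n < N) a n A * b n A).
    by apply: funext => N; apply: eq_bigr => n _; rewrite mulrC.
  by rewrite e.
have hn' : `|piA op u A - 1| <= 1 / 2 * 1.
  apply: (hn A 1 ler01) => s; by rewrite normr1.
have LA0 : L A != 0.
  apply/eqP => e; move: hn'; rewrite ePL e sub0r normrN normr1 mulr1.
  by rewrite ler_pdivlMr ?ltr0n // mul1r -[2]/(2%:R) -[1]/(1%:R) ler_nat.
pose NL := fun f => L f * (L A)^-1.
pose NR := fun f => R' f * (L A)^-1.
have [ML [hM1 [hM2 [hM3 hM4]]]] := day_complex R S S op s0 NL (isBD_scale _ _ L _ isL)
  (mulfV LA0) (fun j f hf => congr1 (fun x => x * (L A)^-1) (hL j f hf).2).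
have [MR [hR1 [hR2 [hR3 hR4]]]] := day_complex R S S (fun s t => op t s) s0 NR (isBD_scale _ _ R' _ isR)
  (eq_ind_r (fun x => x * (L A)^-1 = 1) (mulfV LA0) eRL)
  (fun j f hf => congr1 (fun x => x * (L A)^-1) (hR j f hf).2).
split.
  exists ML; split => //; split => //.
exists MR; split => //; split => //.
Qed.
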